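(* Let $q>4$. For any distinct $x,y,z\in\mathbb{Z}_q$ there exists an $\mathcal{OS}_q(2)$ of period $q(q-1)/2$ if $q$ is odd, or $q(q-2)/2$ if $q$ is even, whose ring sequence has the form $[x,y,z,x,\ldots]$ (i.e. its first four terms are $x,y,z,x$). Moreover, if $x,y,z\neq 0$, then there exists an $\mathcal{OS}_q(2)$ of the same period whose ring sequence has the form $[0,x,y,z,x,\ldots]$.
   Context: For a periodic sequence $S=(s_i)$ over $\mathbb{Z}_q$ write $\mathbf{s}_n(i)=(s_i,\ldots,s_{i+n-1})$ and let $\mathbf{u}^R$ denote the reverse of a tuple. An $\mathcal{OS}_q(n)$ (orientable sequence) is a periodic sequence of period $m$ over $\mathbb{Z}_q$ such that $\mathbf{s}_n(i)=\mathbf{s}_n(j)$ implies $i\equiv j\pmod m$, and $\mathbf{s}_n(i)\neq\mathbf{s}_n(j)^R$ for all $i,j$. The ring sequence of a sequence of period $m$ is one period $[s_0,\ldots,s_{m-1}]$, listed from some starting position. *)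

(* Defs.v *)
From mathcomp Require Import all_boot.
Set Implicit Arguments. Unset Strict Implicit. Unset Printing Implicit Defensive.

(* A periodic sequence S over Z_q (= 'I_q) of period m is represented by its
   ring sequence s : seq 'I_q of size m (one period, listed from some starting
   position); the term s_i (i any natural number) is nth _ s (i mod m).
   window n s i is the n-tuple s_n(i) = (s_i, ..., s_{i+n-1}). *)
Definition window (q n : nat) (s : seq 'I_q) (i : nat) : seq 'I_q :=
  match s with
  | [::] => [::]
  | x0 :: _ => [seq nth x0 s ((i + k) %% size s) | k <- iota 0 n]
  end.

Definition orientable (q n : nat) (s : seq 'I_q) : Prop :=
  0 < size s /\
  (forall i j : nat, window n s i = window n s j -> i = j %[mod size s]) /\
  (forall i j : nat, window n s i <> rev (window n s j)).

(* Main.v *)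
Require Import Defs.
From mathcomp Require Import all_boot zify.
Set Implicit Arguments. Unset Strict Implicit. Unset Printing Implicit Defensive.
Fixpoint pe (l : seq nat) : seq (nat * nat) :=
  match l with
  | x :: ((y :: _) as r) => (x, y) :: pe r
  | _ => [::]
  end.

Definition ce (l : seq nat) := pe (l ++ take 1 l).

Lemma pe_cons a b l : pe (a :: b :: l) = (a, b) :: pe (b :: l).
Proof. by []. Qed.

Lemma pe_cat l1 x l2 : pe (l1 ++ x :: l2) = pe (l1 ++ [:: x]) ++ pe (x :: l2).
Proof.
elim: l1 => [|a l1 IH] //=.
case: l1 IH => [|b l1] IH; first by [].
congr (_ :: _); exact: IH.
Qed.

Lemma size_pe l : size (pe l) = (size l).-1.
Proof. elim: l => [|a [|b l] IH] //=. by rewrite IH. Qed.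

Lemma nth_pe l k : k < (size l).-1 ->
  nth (0,0) (pe l) k = (nth 0 l k, nth 0 l k.+1).
Proof.
elim: l k => [|a [|b l] IH] k //=.
case: k => [|k] //= Hk. by rewrite IH.
Qed.

Arguments pe : simpl never.
Lemma ce_cons a l : ce (a :: l) = pe (a :: l ++ [:: a]).
Proof. by rewrite /ce /= take0. Qed.

Lemma ce_splice a A w C B :
  perm_eq (ce (a :: A ++ w :: C ++ w :: B)) (ce (a :: A ++ w :: B) ++ ce (w :: C)).
Proof.
rewrite !ce_cons.
have -> : a :: (A ++ w :: C ++ w :: B) ++ [:: a] = (a :: A) ++ w :: (C ++ w :: (B ++ [:: a])).
  by rewrite /= -!catA /= -!catA.
have -> : a :: (A ++ w :: B) ++ [:: a] = (a :: A) ++ w :: (B ++ [:: a]).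
  by rewrite /= -!catA.
rewrite (pe_cat (a :: A) w (C ++ _)) (pe_cat (a :: A) w (B ++ _)).
have -> : w :: (C ++ w :: (B ++ [:: a])) = (w :: C) ++ w :: (B ++ [:: a]) by [].
have -> : w :: (C ++ [:: w]) = (w :: C) ++ [:: w] by [].
rewrite (pe_cat (w :: C) w) -catA perm_cat2l perm_catC //.
Qed.

Lemma ce_cat w C B : ce (w :: C ++ w :: B) = ce (w :: C) ++ ce (w :: B).
Proof.
rewrite !ce_cons.
have -> : w :: (C ++ w :: B) ++ [:: w] = (w :: C) ++ w :: (B ++ [:: w]) by rewrite /= -!catA.
by rewrite (pe_cat (w :: C) w).
Qed.

Lemma ce_rot1 a l : perm_eq (ce (a :: l)) (ce (l ++ [:: a])).
Proof.
case: l => [|b l] //.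
rewrite !ce_cons.
have -> : b :: (l ++ [:: a]) ++ [:: b] = (b :: l) ++ a :: [:: b] by rewrite /= -catA.
rewrite (pe_cat (b :: l) a [:: b]).
have -> : pe (a :: (b :: l) ++ [:: a]) = (a,b) :: pe ((b :: l) ++ [:: a]) by [].
have -> : pe [:: a; b] = [:: (a, b)] by [].
by rewrite -cat1s perm_catC.
Qed.
Definition unord (e : nat * nat) := (minn e.1 e.2, maxn e.1 e.2).
Definition good (E : seq (nat * nat)) :=
  all (fun e => e.1 != e.2) E && uniq (map unord E).

Lemma good_perm E1 E2 : perm_eq E1 E2 -> good E1 = good E2.
Proof. by move=> p; rewrite /good (perm_all _ p) (perm_uniq (perm_map unord p)). Qed.

Lemma good_cat E1 E2 : good E1 -> good E2 ->
  (forall e1 e2, e1 \in E1 -> e2 \in E2 -> unord e1 != unord e2) -> good (E1 ++ E2).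
Proof.
move=> /andP[a1 u1] /andP[a2 u2] H.
rewrite /good all_cat a1 a2 map_cat cat_uniq u1 u2 /= andbT.
apply/hasPn => x /mapP[e2 He2 ->]; apply/negP => /mapP[e1 He1 E].
by move: (H _ _ He1 He2); rewrite E eqxx.
Qed.

Lemma good4 u a v b : a < b -> b < u -> u < v ->
  good [:: (u, a); (a, v); (v, b); (b, u)].
Proof.
move=> ab bu uv.
rewrite /good /unord /= !inE !xpair_eqE.
have H1 : minn u a = a by lia.
have H2 : maxn u a = u by lia.
have H3 : minn a v = a by lia.
have H4 : maxn a v = v by lia.
have H5 : minn v b = b by lia.
have H6 : maxn v b = v by lia.
have H7 : minn b u = b by lia.
have H8 : maxn b u = u by lia.
rewrite H1 H2 H3 H4 H5 H6 H7 H8.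
lia.
Qed.

Lemma good3 u c v : c < u -> u < v ->
  good [:: (u, c); (c, v); (v, u)].
Proof.
move=> cu uv.
rewrite /good /unord /= !inE !xpair_eqE.
have H1 : minn u c = c by lia.
have H2 : maxn u c = u by lia.
have H3 : minn c v = c by lia.
have H4 : maxn c v = v by lia.
have H5 : minn v u = u by lia.
have H6 : maxn v u = v by lia.
rewrite H1 H2 H3 H4 H5 H6.
lia.
Qed.

Definition blk n j := [:: n; j.*2; n.+1; j.*2.+1].
Definition extra n : seq (seq nat) := if odd n then [:: [:: n; n.-1; n.+1]] else [::].
Definition blocks n := [seq blk n j | j <- iota 0 n./2] ++ extra n.
Definition Wu n := flatten (blocks n).

Lemma ce_flat u bs : all (fun b => head u.+1 b == u) bs ->
  ce (flatten bs) = flatten (map ce bs).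
Proof.
elim: bs => [|b bs IH] //= /andP[hb hall].
case: b hb => [|x p] /=; first by move=> /eqP; lia.
move=> /eqP ->.
case: bs IH hall => [|b' bs'] IH hall; first by rewrite /= !cats0.
case: b' IH hall => [|y p'] IH /=; first by move=> /andP[/eqP]; lia.
move=> /andP[/eqP Ey hall]; subst y.
rewrite ce_cat; congr (_ ++ _).
by move: IH; rewrite /= eqxx hall => ->.
Qed.

Lemma pe_mem l e : e \in pe l -> (e.1 \in l) && (e.2 \in l).
Proof.
elim: l => [|a [|b l] IH] //=.
rewrite pe_cons inE => /orP[/eqP -> | /IH]; first by rewrite /= !inE !eqxx orbT.
move=> /andP[h1 h2]; by rewrite in_cons h1 orbT in_cons h2 orbT.
Qed.

Lemma ce_mem l e : e \in ce l -> (e.1 \in l) && (e.2 \in l).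
Proof.
rewrite /ce => /pe_mem /andP[]; rewrite !mem_cat => /orP[->|/mem_take ->] /orP[->|/mem_take ->] //.
Qed.

Definition Fk n k := flatten [seq ce (blk n j) | j <- iota 0 k].

Lemma ce_blk n j : ce (blk n j) = [:: (n, j.*2); (j.*2, n.+1); (n.+1, j.*2.+1); (j.*2.+1, n)].
Proof. reflexivity. Qed.

Lemma Fk_prop n k : k.*2 <= n -> good (Fk n k) /\
  forall e, e \in Fk n k -> (unord e).1 < k.*2 /\ n <= (unord e).2.
Proof.
elim: k => [|k IH] Hk; first by [].
have [g1 m1] := IH (leq_trans (leqnSn _) (leq_trans (leqnSn _) Hk)).
rewrite /Fk -addn1 iotaD map_cat flatten_cat /= add0n -/(Fk n k) addn1.
split.
  apply: good_cat => //; first by apply: good4; lia.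
  move=> e1 e2 /m1 [h1 _]; rewrite !inE => /or4P [] /eqP -> ;
    apply/negP => /eqP E; move: h1; rewrite E /unord /=; lia.
move=> e; rewrite mem_cat => /orP [/m1 [h1 h2] | ]; first by move: h1 h2; rewrite /unord /=; lia.
rewrite !inE => /or4P [] /eqP -> ; rewrite /unord /=; lia.
Qed.

Lemma Wu_prop n : good (ce (Wu n)) /\ forall e, e \in ce (Wu n) -> n <= (unord e).2.
Proof.
rewrite /Wu (ce_flat (u := n)); last first.
  rewrite /blocks all_cat /extra; apply/andP; split.
    by apply/allP => b /mapP [j _ ->].
  by case: (odd n) => //=; rewrite eqxx.
rewrite /blocks map_cat flatten_cat -map_comp.
have Hh : (n./2).*2 <= n by rewrite -{2}(odd_double_half n); lia.
have [g1 m1] := Fk_prop Hh.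
rewrite -/(Fk n n./2) /extra.
case Ho: (odd n) => /=; last first.
  rewrite cats0; split => // e /m1 []; done.
have E : n = (n./2).*2.+1 by rewrite -{1}(odd_double_half n) Ho.
split.
  apply: good_cat => //; first by apply: good3; lia.
  move=> e1 e2 /m1 [h1 _]; rewrite !inE => /or3P [] /eqP -> ;
    apply/negP => /eqP E'; move: h1; rewrite E' /unord /=; lia.
move=> e; rewrite mem_cat => /orP [/m1 [h1 h2] | ] //.
rewrite !inE => /or3P [] /eqP -> ; rewrite /unord /=; lia.
Qed.

Lemma size_Wu n : size (Wu n) = 4 * n./2 + 3 * odd n.
Proof.
rewrite /Wu /blocks flatten_cat size_cat /extra.
have -> : forall k, size (flatten [seq blk n j | j <- iota 0 k]) = 4 * k.
  elim=> [|k IH] //; rewrite -addn1 iotaD map_cat flatten_cat size_cat IH /=; lia.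
by case: (odd n).
Qed.

Lemma all_Wu n : all (fun a => a < n.+2) (Wu n).
Proof.
rewrite /Wu /blocks flatten_cat all_cat /extra; apply/andP; split; last first.
  case: (odd n) => //=; lia.
apply/allP => a /flatten_mapP [j]; rewrite mem_iota add0n => /andP[_ hj].
have : j.*2.+1 < n by have := odd_double_half n; move: hj; lia.
rewrite !inE; lia.
Qed.

Lemma Wu_head n : 2 <= n -> Wu n = n :: 0 :: drop 2 (Wu n).
Proof.
move=> hn; rewrite /Wu /blocks.
have : 0 < n./2 by have := odd_double_half n; move: hn; lia.
by case: (n./2) => [|k].
Qed.

Definition Inv n M L := (exists A B, L = [:: 0; 1; 2; 3; 1] ++ A ++ 0 :: B) /\
  all (fun a => a < n) L /\ size L = M /\ good (ce L).

Lemma Inv_step n M L : 4 <= n -> Inv n M L -> exists L', Inv n.+2 (M + size (Wu n)) L'.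
Proof.
move=> hn [[A [B EL]] [hall [hs hg]]].
set P := drop 2 (Wu n) ++ [:: n].
have EW := Wu_head (leq_trans (isT : 2 <= 4) hn).
exists ([:: 0; 1; 2; 3; 1] ++ (A ++ 0 :: P) ++ 0 :: B).
split; first by exists (A ++ 0 :: P), B.
split.
  have hA : all (fun a => a < n.+2) A.
    apply/allP => a ha; have : a \in L by rewrite EL !mem_cat ha orbT.
    move/(allP hall) => /=; lia.
  have hB : all (fun a => a < n.+2) B.
    apply/allP => a ha; have : a \in L by rewrite EL !mem_cat; apply/orP; right; apply/orP; right; rewrite in_cons ha orbT.
    move/(allP hall) => /=; lia.
  have hD : all (fun a => a < n.+2) (drop 2 (Wu n)).
    apply/allP => a /mem_drop ha; exact: (allP (all_Wu n) _ ha).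
  rewrite !all_cat /= hA hB /P all_cat hD /= !andbT.
  lia.
split.
  rewrite /= size_cat /= size_cat /= -hs EL /= size_cat /= EW /P /= size_cat /= addn1.
  lia.
have Hp : perm_eq (ce ([:: 0; 1; 2; 3; 1] ++ (A ++ 0 :: P) ++ 0 :: B)) (ce L ++ ce (Wu n)).
  have -> : [:: 0; 1; 2; 3; 1] ++ (A ++ 0 :: P) ++ 0 :: B =
            0 :: ([:: 1; 2; 3; 1] ++ A) ++ 0 :: P ++ 0 :: B by rewrite /= -catA.
  apply: (perm_trans (ce_splice _ _ _ _ _)).
  rewrite EL; have -> : [:: 0; 1; 2; 3; 1] ++ A ++ 0 :: B = 0 :: ([:: 1; 2; 3; 1] ++ A) ++ 0 :: B by [].
  rewrite perm_cat2l EW /P.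
  by rewrite perm_sym ce_rot1.
rewrite (good_perm Hp).
have [g2 m2] := Wu_prop n.
apply: good_cat => // e1 e2 h1 /m2 h2.
move: (ce_mem h1) => /andP[a1 a2].
move: (allP hall _ a1) (allP hall _ a2) => b1 b2.
apply/negP => /eqP E; move: h2 b1 b2; rewrite -E /unord /=; lia.
Qed.

Definition mm q := (if odd q then q * (q - 1) else q * (q - 2)) %/ 2.

Lemma Inv5 : Inv 5 (mm 5) [:: 0; 1; 2; 3; 1; 4; 2; 0; 3; 4].
Proof.
split; first by exists [:: 4; 2], [:: 3; 4].
split; first by [].
split; first by [].
reflexivity.
Qed.

Lemma Inv6 : Inv 6 (mm 6) [:: 0; 1; 2; 3; 1; 5; 0; 2; 4; 3; 5; 4].
Proof.
split; first by exists [:: 5], [:: 2; 4; 3; 5; 4].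
split; first by [].
split; first by [].
reflexivity.
Qed.

Lemma mm_step n : 2 <= n -> mm n + size (Wu n) = mm n.+2.
Proof.
move=> hn; rewrite size_Wu /mm /=.
have := odd_double_half n.
case: (odd n) => /= E; rewrite -E ?negbK /=; nia.
Qed.

Lemma Inv_all q : 5 <= q -> exists L, Inv q (mm q) L.
Proof.
elim/ltn_ind: q => q IH hq.
case: (ltngtP q 7) => h.
- have : (q == 5) || (q == 6) by lia.
  by case/orP => /eqP ->; [exists [:: 0; 1; 2; 3; 1; 4; 2; 0; 3; 4]; exact: Inv5 |
     exists [:: 0; 1; 2; 3; 1; 5; 0; 2; 4; 3; 5; 4]; exact: Inv6].
- have [n En] : exists n, q = n.+2 by exists q.-2; lia.
  subst q.
  have [L HL] := IH n (ltnW (ltnSn _)) (ltac:(lia)).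
  rewrite -mm_step; last by lia.
  apply: (Inv_step _ HL); lia.
- subst q. have [L HL] := IH 5 isT isT.
  rewrite -(mm_step (n:=5)) //. exact: (Inv_step _ HL).
Qed.

Lemma size_ce L : size (ce L) = size L.
Proof. case: L => [|a l] //; rewrite ce_cons size_pe /= size_cat /= addn1. by []. Qed.

Lemma nth_ce L k : k < size L ->
  nth (0,0) (ce L) k = (nth 0 L k, nth 0 L (k.+1 %% size L)).
Proof.
case: L => [|a l] // hk.
rewrite ce_cons nth_pe; last by rewrite /= size_cat /= addn1.
have -> : a :: l ++ [:: a] = (a :: l) ++ [:: a] by [].
rewrite !nth_cat hk.
case: ifP => h.
- by rewrite modn_small.
- have -> : k.+1 = size (a :: l) by move: hk h => /=; lia.
  by rewrite subnn modnn.
Qed.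

Lemma orient_map q (f : nat -> 'I_q) L : 0 < size L -> good (ce L) ->
  {in L &, injective f} -> orientable 2 (map f L).
Proof.
case: L => [|a l] // _ hg hf.
set L := a :: l.
move: hg => /andP[hloop huniq].
have hm : 0 < size L by [].
set m := size L.
have W : forall i, window 2 (map f L) i =
   [:: f (nth 0 L (i %% m)); f (nth 0 L ((i %% m).+1 %% m))].
  move=> i; rewrite /window /= size_map -/L -/m.
  rewrite addn0 -[f a :: map f l]/(map f L) !(nth_map a) ?ltn_mod //.
  rewrite !(set_nth_default 0) ?ltn_mod //.
  by rewrite /m /= -(addn1 (i %% _)) modnDml.
have key : forall i j, i < m -> j < m ->
    unord (nth (0,0) (ce L) i) = unord (nth (0,0) (ce L) j) -> i = j.
  move=> i j hi hj E.
  have hs : size (map unord (ce L)) = m by rewrite size_map size_ce.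
  apply/eqP; rewrite -(nth_uniq (0,0) _ _ huniq) ?hs //.
  by rewrite !(nth_map (0,0)) ?size_ce // E.
have inj : forall i j, i < m -> j < m -> f (nth 0 L i) = f (nth 0 L j) ->
    nth 0 L i = nth 0 L j.
  by move=> i j hi hj; apply: hf; apply: mem_nth.
split; first by rewrite size_map.
rewrite size_map; split.
  move=> i j; rewrite !W => -[E1 E2].
  have hi : i %% m < m by rewrite ltn_mod.
  have hj : j %% m < m by rewrite ltn_mod.
  apply: key => //.
  rewrite !nth_ce //.
  rewrite (inj _ _ hi hj E1) (inj _ _ _ _ E2) ?ltn_mod //.
move=> i j; rewrite !W /rev /= => -[E1 E2].
have hi : i %% m < m by rewrite ltn_mod.
have hj : j %% m < m by rewrite ltn_mod.
have F1 := inj _ _ hi (ltn_mod _ _) E1.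
have F2 := inj _ _ (ltn_mod _ _) hj E2.
have Eij : i %% m = j %% m.
  apply: key => //; rewrite !nth_ce // /unord /= F1 F2.
  by rewrite minnC maxnC.
have hce : i %% m < size (ce L) by rewrite size_ce.
have := allP hloop _ (mem_nth (0,0) hce).
by rewrite nth_ce //= F2 -Eij eqxx.
Qed.

Lemma relabel q (w x y z : 'I_q) : uniq [:: w; x; y; z] ->
  exists f : nat -> 'I_q, [/\ f 0 = w, f 1 = x, f 2 = y, f 3 = z &
     forall i j, i < q -> j < q -> f i = f j -> i = j].
Proof.
move=> hu.
set T := [:: w; x; y; z].
set sg := T ++ [seq i <- enum 'I_q | i \notin T].
have us : uniq sg.
  rewrite /sg cat_uniq hu filter_uniq ?enum_uniq // andbT /=.
  apply/hasPn => i; rewrite mem_filter => /andP[hi _]; exact: hi.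
have ss : size sg = q.
  rewrite -[RHS](size_enum_ord q); apply: perm_size; apply: uniq_perm => //.
    exact: enum_uniq.
  by move=> i; rewrite /sg mem_cat mem_filter mem_enum andbT orbN.
exists (fun k => nth w sg k); split => //.
move=> i j hi hj E; apply/eqP; rewrite -(nth_uniq w _ _ us) ?ss //.
by rewrite E.
Qed.


Lemma final q (hq : 4 < q) (w x y z : 'I_q) : uniq [:: w; x; y; z] ->
  exists rest : seq 'I_q,
    size [:: w, x, y, z, x & rest] = mm q /\ orientable 2 [:: w, x, y, z, x & rest] /\
    orientable 2 [:: x, y, z, x & rest ++ [:: w]].
Proof.
move=> hu.
have [f [f0 f1 f2 f3 finj]] := relabel hu.
have [L [[A [B EL]] [hall [hs hg]]]] := Inv_all hq.
have injL : forall L', all (fun a => a < q) L' -> {in L' &, injective f}.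
  move=> L' hL a b ha hb; apply: finj; [exact: (allP hL _ ha) | exact: (allP hL _ hb)].
exists (map f (A ++ 0 :: B)).
have EM : [:: w, x, y, z, x & map f (A ++ 0 :: B)] = map f L by rewrite EL /= f0 f1 f2 f3.
split; first by rewrite EM size_map.
split.
  rewrite EM; apply: orient_map => //; last exact: injL.
  by rewrite EL.
set L' := [:: 1; 2; 3; 1] ++ A ++ 0 :: B ++ [:: 0].
have EM' : [:: x, y, z, x & map f (A ++ 0 :: B) ++ [:: w]] = map f L'.
  by rewrite /L' /= f1 f2 f3 !map_cat /= !map_cat /= f0 -catA.
have hL' : all (fun a => a < q) L'.
  apply/allP => a ha; apply: (allP hall); move: ha; rewrite EL /L' !mem_cat !inE !mem_cat !inE.
  case: (a \in A); case: (a \in B); rewrite /= ?orbT //.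
  lia.
rewrite EM'; apply: orient_map => //; last exact: injL.
have -> : L' = ([:: 1; 2; 3; 1] ++ A ++ 0 :: B) ++ [:: 0] by rewrite /L' -!catA.
rewrite -(good_perm (ce_rot1 _ _)).
by move: hg; rewrite EL.
Qed.

Theorem lemma3p21 (q : nat) (hq : 4 < q) (x y z : 'I_q)
  (hxy : x != y) (hxz : x != z) (hyz : y != z) :
  let m := (if odd q then q * (q - 1) else q * (q - 2)) %/ 2 in
  (exists rest : seq 'I_q,
     let s := [:: x, y, z, x & rest] in size s = m /\ orientable 2 s) /\
  ((x : nat) != 0 -> (y : nat) != 0 -> (z : nat) != 0 ->
   exists (zero : 'I_q) (rest : seq 'I_q), (zero : nat) = 0 /\
     let s := [:: zero, x, y, z, x & rest] in size s = m /\ orientable 2 s).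
Proof.
move=> m.
move: hxy hxz hyz; rewrite -!val_eqE /= => hxy hxz hyz.
split.
  have [k [hk hkx hky hkz]] : exists k, [/\ k < 4, k != x, k != y & k != z].
    have : [|| [&& 0 != x :> nat, 0 != y :> nat & 0 != z :> nat],
               [&& 1 != x :> nat, 1 != y :> nat & 1 != z :> nat],
               [&& 2 != x :> nat, 2 != y :> nat & 2 != z :> nat] |
               [&& 3 != x :> nat, 3 != y :> nat & 3 != z :> nat]] by lia.
    case/or4P => /and3P[a b c]; [exists 0 | exists 1 | exists 2 | exists 3]; by split.
  have hkq : k < q by lia.
  have hu : uniq [:: Ordinal hkq; x; y; z].
    by rewrite /= !inE -!val_eqE /=; lia.
  have [rest [hs [_ ho]]] := final hq hu.
  exists (rest ++ [:: Ordinal hkq]); split => //.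
  by move: hs; rewrite /= size_cat /= addn1.
move=> hx hy hz.
have h0q : 0 < q by lia.
have hu : uniq [:: Ordinal h0q; x; y; z].
  by rewrite /= !inE -!val_eqE /=; lia.
have [rest [hs [ho _]]] := final hq hu.
by exists (Ordinal h0q), rest.
Qed.
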